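(* If $G$ is an SSP group of length $5$ of $G(5,c)$-type, then $c\in\{4,5\}$; in particular there is no SSP group of $G(5,3)$-type.
   Context: Notation: $x^f$ is the image of $x$ under $f$; $[x,y]=x^{-1}y^{-1}xy$; $e$ is the identity. A triple $(G,H,f)$, where $H\le G$ and $f:H\to G$ is a homomorphism, is simple if the only subgroup $K\le H$ that is normal in $G$ and satisfies $K^f\le K$ is trivial. For such a triple put $G_0=G$, $H_0=H$, and for $k\ge1$, $G_k=(H_{k-1})^f$, $H_k=H\cap G_k$. Let $p$ be a prime or $\infty$. A polycyclic group $G$ is an SSP group with respect to $(G,H,f)$ if: (1) $f$ is injective; (2) each $(G_k,H_k,f|_{H_k})$ is a simple triple; (3) $H_k$ and $G_{k+1}$ are normal in $G_k$ and $G_k=H_kG_{k+1}$; (4) whenever $G_k$ is nontrivial, $G_k/H_k$ is cyclic of order $p$ (infinite cyclic if $p=\infty$). The length $n$ is the Hirsch length if $p=\infty$ and $\log_p|G|$ if $p$ is prime. A canonical basis of $G$ is a tuple $(a_1,\dots,a_n)$ with $a_1,\dots,a_{n-1}\in H$, $a_{i+1}=a_i^f$ for $1\le i\le n-1$, $G_i=\langle a_{i+1},\dots,a_n\rangle$ and $H_i=\langle a_{i+1},\dots,a_{n-1}\rangle$ for $0\le i\le n-1$. The cut-off point $c$ is the largest $s\in\{2,\dots,n\}$ with $[a_1,a_2]=\dots=[a_1,a_s]=e$; $G$ is then of $G(n,c)$-type. *)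

(* Defs.v *)
(* abstract (possibly infinite) groups via mathcomp's
   [groupType] (boot/monoid.v); subsets of a group are Prop-valued predicates. *)
From HB Require Import structures.
From mathcomp Require Import all_boot monoid.

Set Implicit Arguments.
Unset Strict Implicit.
Unset Printing Implicit Defensive.

Local Open Scope group_scope.

Section SSP.

Variable gT : groupType.

Definition gset := gT -> Prop.

Definition subset (A B : gset) : Prop := forall x, A x -> B x.
Definition set_eq (A B : gset) : Prop := forall x, A x <-> B x.
Definition setI (A B : gset) : gset := fun x => A x /\ B x.
Definition setM (A B : gset) : gset := fun z => exists x y, A x /\ B y /\ z = x * y.
Definition image (f : gT -> gT) (A : gset) : gset := fun y => exists x, A x /\ f x = y.
Definition trivial_set (A : gset) : Prop := forall x, A x -> x = 1.

Definition subgroup (S : gset) : Prop :=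
  S 1 /\ (forall x y, S x -> S y -> S (x * y)) /\ (forall x, S x -> S x^-1).

Definition normal_in (N G : gset) : Prop :=
  subgroup N /\ subgroup G /\ subset N G /\
  (forall g n, G g -> N n -> N (n ^ g)).

Definition generated (S : gset) : gset :=
  fun x => forall K, subgroup K -> subset S K -> K x.

Definition hom_on (H : gset) (f : gT -> gT) : Prop :=
  forall x y, H x -> H y -> f (x * y) = f x * f y.

Definition injective_on (H : gset) (f : gT -> gT) : Prop :=
  forall x y, H x -> H y -> f x = f y -> x = y.

Definition triple (G H : gset) (f : gT -> gT) : Prop :=
  subgroup G /\ subgroup H /\ subset H G /\ hom_on H f /\ subset (image f H) G.

Definition simple_triple (G H : gset) (f : gT -> gT) : Prop :=
  triple G H f /\
  forall K, subgroup K -> subset K H -> normal_in K G -> subset (image f K) K ->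
    trivial_set K.

Fixpoint GHseq (G H : gset) (f : gT -> gT) (k : nat) : gset * gset :=
  match k with
  | 0 => (G, H)
  | k'.+1 => let G' := image f (GHseq G H f k').2 in (G', setI H G')
  end.
Definition Gk G H f k := (GHseq G H f k).1.
Definition Hk G H f k := (GHseq G H f k).2.

(* the quotient G/N (N normal in G) is cyclic, generated by the coset of g:
   every x in G lies in some coset g^m N, m an integer *)
Definition quot_gen (G N : gset) (g : gT) : Prop :=
  G g /\ forall x, G x -> exists m : nat, N (g ^- m * x) \/ N (g ^+ m * x).

(* p : option nat; [Some q] is a prime q, [None] stands for p = infinity *)
Definition prime_or_inf (p : option nat) : Prop :=
  match p with Some q => prime q | None => True end.

Definition quot_cyclic_of_order (p : option nat) (G N : gset) : Prop :=
  exists g, quot_gen G N g /\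
    match p with
    | Some q => N (g ^+ q) /\ forall m, (0 < m < q)%N -> ~ N (g ^+ m)
    | None => forall m, (0 < m)%N -> ~ N (g ^+ m)
    end.

(* a subnormal series G = S 0 >= S 1 >= ... >= S m = 1 with cyclic factors;
   b i records whether the factor S i / S (i+1) is infinite *)
Definition cyclic_series (G : gset) (m : nat) (S : nat -> gset) (b : nat -> bool) : Prop :=
  set_eq (S 0) G /\ subgroup (S m) /\ trivial_set (S m) /\
  forall i, (i < m)%N ->
    normal_in (S i.+1) (S i) /\
    exists g, quot_gen (S i) (S i.+1) g /\
      (if b i then forall k, (0 < k)%N -> ~ S i.+1 (g ^+ k)
       else exists k, (0 < k)%N /\ S i.+1 (g ^+ k)).

Definition polycyclic (G : gset) : Prop :=
  exists m S b, cyclic_series G m S b.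

Definition hirsch_length (G : gset) (n : nat) : Prop :=
  exists m S b, cyclic_series G m S b /\ count b (iota 0 m) = n.

Definition finite_of_order (G : gset) (N : nat) : Prop :=
  exists s : seq gT, uniq s /\ (forall x, G x <-> x \in s) /\ size s = N.

Definition ssp_length (p : option nat) (G : gset) (n : nat) : Prop :=
  match p with
  | Some q => finite_of_order G (q ^ n)%N
  | None => hirsch_length G n
  end.

Definition SSP (p : option nat) (G H : gset) (f : gT -> gT) : Prop :=
  prime_or_inf p /\ polycyclic G /\
  injective_on H f /\
  forall k,
    simple_triple (Gk G H f k) (Hk G H f k) f /\
    normal_in (Hk G H f k) (Gk G H f k) /\
    normal_in (Gk G H f k.+1) (Gk G H f k) /\
    set_eq (Gk G H f k) (setM (Hk G H f k) (Gk G H f k.+1)) /\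
    (~ trivial_set (Gk G H f k) -> quot_cyclic_of_order p (Gk G H f k) (Hk G H f k)).

(* canonical basis (a 1, ..., a n) of G (indices outside 1..n are irrelevant) *)
Definition canonical_basis (G H : gset) (f : gT -> gT) (n : nat) (a : nat -> gT) : Prop :=
  (forall i, (1 <= i <= n.-1)%N -> H (a i)) /\
  (forall i, (1 <= i <= n.-1)%N -> a i.+1 = f (a i)) /\
  (forall i, (i <= n.-1)%N ->
     set_eq (Gk G H f i) (generated (fun x => exists j, (i.+1 <= j <= n)%N /\ x = a j)) /\
     set_eq (Hk G H f i) (generated (fun x => exists j, (i.+1 <= j <= n.-1)%N /\ x = a j))).

Definition is_cutoff (n : nat) (a : nat -> gT) (c : nat) : Prop :=
  (2 <= c <= n)%N /\
  (forall s, (2 <= s <= c)%N -> [~ a 1%N, a s] = 1) /\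
  ((c < n)%N -> [~ a 1%N, a c.+1] <> 1).

Definition of_Gnc_type (G H : gset) (f : gT -> gT) (n c : nat) : Prop :=
  exists a, canonical_basis G H f n a /\ is_cutoff n a c.

End SSP.

(* Main.v *)
Require Import Defs.
From HB Require Import structures.
From mathcomp Require Import all_boot monoid.
From mathcomp Require Import ssralg ssrint zify.
From Stdlib Require Import Classical.
Set Implicit Arguments. Unset Strict Implicit. Unset Printing Implicit Defensive.
Local Open Scope group_scope.

Section Zexp.
Variable gT : groupType.
Implicit Types x y g : gT.

Definition zexp x (k : int) : gT :=
  match k with Posz n => x ^+ n | Negz n => (x ^+ n.+1)^-1 end.

Lemma zexp0 x : zexp x 0 = 1. Proof. by []. Qed.
Lemma zexp1 x : zexp x 1 = x. Proof. by []. Qed.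
Lemma zexpP x n : zexp x (Posz n) = x ^+ n. Proof. by []. Qed.

Lemma commXX x m n : commute (x ^+ m) (x ^+ n).
Proof. apply: commuteX2; exact: commute_refl. Qed.

Lemma zexpS x k : zexp x (k + 1)%R = zexp x k * x.
Proof.
case: k => [n|n].
  have -> : (Posz n + 1)%R = Posz n.+1 by lia.
  by rewrite /= expgSr.
case: n => [|n].
  have -> : (Negz 0 + 1)%R = Posz 0 by lia.
  by rewrite /= expg1 mulVg.
have -> : (Negz n.+1 + 1)%R = Negz n by lia.
rewrite /= (expgSr x n.+1) invgM.
have C : commute x^-1 (x ^+ n.+1)^-1.
  apply: commuteV; apply/commute_sym; apply: commuteV; apply: commute_sym.
  by rewrite -[x in commute x _]expg1; apply: commXX.
by rewrite C mulgVK.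
Qed.

Lemma zexpSV x k : zexp x (k - 1)%R = zexp x k * x^-1.
Proof.
have -> : zexp x k = zexp x ((k - 1) + 1)%R by congr zexp; lia.
by rewrite zexpS mulgK.
Qed.

Lemma zexpD x m n : zexp x (m + n)%R = zexp x m * zexp x n.
Proof.
elim/int_rect: n => [|n IH|n IH].
- have -> : (m + 0)%R = m by lia.
  by rewrite zexp0 mulg1.
- have -> : (m + Posz n.+1)%R = ((m + n) + 1)%R by lia.
  have -> : (Posz n.+1) = (Posz n + 1)%R by lia.
  by rewrite !zexpS IH mulgA.
- have -> : (m + - Posz n.+1)%R = ((m + - Posz n) - 1)%R by lia.
  have -> : (- Posz n.+1)%R = (- Posz n - 1)%R by lia.
  by rewrite !zexpSV IH mulgA.
Qed.

Lemma zexpN x k : zexp x (- k)%R = (zexp x k)^-1.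
Proof.
apply/esym/mulg1_eq. have -> : 1 = zexp x 0 by []. rewrite -zexpD; congr zexp; lia.
Qed.

Lemma zexpM x m n : zexp x (m * n)%R = zexp (zexp x m) n.
Proof.
elim/int_rect: n => [|n IH|n IH].
- have -> : (m * 0)%R = 0%R by lia.
  by [].
- have -> : (m * Posz n.+1)%R = (m * n + m)%R by lia.
  have -> : (Posz n.+1) = (Posz n + 1)%R by lia.
  by rewrite zexpS zexpD IH.
- have -> : (m * - Posz n.+1)%R = (m * - Posz n - m)%R by lia.
  have -> : (- Posz n.+1)%R = (- Posz n - 1)%R by lia.
  by rewrite zexpSV zexpD zexpN IH.
Qed.

Lemma zexpC x m n : commute (zexp x m) (zexp x n).
Proof. rewrite /commute -!zexpD; congr zexp; lia. Qed.

Lemma commute_zexp x y k : commute x y -> commute x (zexp y k).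
Proof. by case: k => n C /=; [apply: commuteX | apply: commuteV; apply: commuteX]. Qed.

Lemma commute_zexp2 x y i j : commute x y -> commute (zexp x i) (zexp y j).
Proof.
move=> C; apply: commute_zexp; apply: commute_sym; apply: commute_zexp.
exact: commute_sym.
Qed.

Lemma zexpMn x y k : commute x y -> zexp (x * y) k = zexp x k * zexp y k.
Proof.
move=> C; case: k => n /=; first by rewrite expgMn.
rewrite expgMn // invgM.
have C2 : commute (x ^+ n.+1)^-1 (y ^+ n.+1)^-1.
  apply: commuteV; apply/commute_sym; apply: commuteV; apply: commute_sym.
  by apply: commuteX2.
by rewrite C2.
Qed.

Lemma zexp1g k : zexp 1 k = 1.
Proof. by case: k => n /=; rewrite expg1n ?invg1. Qed.

Lemma conj_zexp x g k : (zexp x k) ^ g = zexp (x ^ g) k.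
Proof. by case: k => n /=; rewrite ?conjVg conjXg. Qed.

Lemma zexp_eq1 x k : zexp x k = 1 -> x ^+ `|k|%N = 1.
Proof.
case: k => n /= E; first by [].
by rewrite -(invgK (x ^+ _)) E invg1.
Qed.

Lemma zexp_abs1 x k : x ^+ `|k|%N = 1 -> zexp x k = 1.
Proof. by case: k => n /= ->; rewrite ?invg1. Qed.

End Zexp.

Lemma zexpVx (gT : groupType) (x : gT) k : zexp x^-1 k = (zexp x k)^-1.
Proof. by case: k => n /=; rewrite expVgn. Qed.


Section L.
Variable gT : groupType.
Implicit Types x y g : gT.
Implicit Types S K : gset gT.

Lemma expg_gcd x m n : x ^+ m = 1 -> x ^+ n = 1 -> x ^+ (gcdn m n) = 1.
Proof.
move=> Em En; case: (posnP m) => [m0|m_gt0]; first by rewrite m0 gcd0n.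
case: (egcdn m n) / (egcdnP n m_gt0) => km kn E _.
have : x ^+ (km * m) = 1 by rewrite mulnC expgnA Em expg1n.
by rewrite E expgnDr mulnC expgnA En expg1n mul1g.
Qed.

Lemma expg_sq x q n : prime q -> x ^+ q = 1 -> x ^+ (n * n) = 1 -> x ^+ n = 1.
Proof.
move=> pq Eq En.
case D: (q %| n).
  by move/dvdnP: D => [k ->]; rewrite mulnC expgnA Eq expg1n.
have cop : coprime q (n * n) by rewrite coprimeMr prime_coprime // D.
have := expg_gcd Eq En; rewrite (eqP cop) expg1 => ->; exact: expg1n.
Qed.

Lemma sub_exp S x n : subgroup S -> S x -> S (x ^+ n).
Proof.
move=> [S1 [SM SV]] Sx; elim: n => [|n IH] //; rewrite expgS; exact: (SM).
Qed.

Lemma sub_zexp S x k : subgroup S -> S x -> S (zexp x k).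
Proof.
move=> sS Sx; case: k => n /=; first exact: (sub_exp).
have [S1 [SM SV]] := sS; apply: (SV); exact: (sub_exp).
Qed.

Lemma sub_comm S x y : subgroup S -> S x -> S y -> S [~ x, y].
Proof.
move=> [S1 [SM SV]] Sx Sy; rewrite /commg /conjg.
apply: (SM); first exact: (SV).
apply: (SM); first exact: (SV).
exact: (SM).
Qed.

Lemma sub_conj S x y : subgroup S -> S x -> S y -> S (x ^ y).
Proof.
move=> [S1 [SM SV]] Sx Sy; rewrite /conjg.
apply: (SM); first exact: (SV).
exact: (SM).
Qed.

Section Hom.
Variables (H : gset gT) (f : gT -> gT).
Hypotheses (sH : subgroup H) (hom : hom_on H f).

Lemma hom1 : f 1 = 1.
Proof.
case: sH => H1 _. have := hom H1 H1; rewrite mulg1 => E.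
by apply: (mulgI (f 1)); rewrite -E mulg1.
Qed.

Lemma homV x : H x -> f x^-1 = (f x)^-1.
Proof.
case: sH => H1 [HM HV] Hx. apply/esym/mulg1_eq.
by rewrite -hom // ?mulgV ?hom1 //; exact: (HV).
Qed.

Lemma homX x n : H x -> f (x ^+ n) = (f x) ^+ n.
Proof.
move=> Hx; elim: n => [|n IH]; first exact: hom1.
by rewrite !expgS hom // ?IH //; apply: (sub_exp).
Qed.

Lemma homZ x k : H x -> f (zexp x k) = zexp (f x) k.
Proof.
move=> Hx; case: k => n /=; first exact: homX.
by rewrite homV ?homX //; apply: (sub_exp).
Qed.

Lemma homM x y : H x -> H y -> f (x * y) = f x * f y.
Proof. exact: hom. Qed.

Lemma homR x y : H x -> H y -> f [~ x, y] = [~ f x, f y].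
Proof.
case: sH => H1 [HM HV] Hx Hy; rewrite /commg /conjg.
have Hxy : H (x * y) by exact: HM.
have Hx' : H x^-1 by exact: HV.
have Hy' : H y^-1 by exact: HV.
rewrite hom //; last by apply: HM.
rewrite hom // hom // !homV //.
Qed.

Lemma inj_comm x y : injective_on H f -> H x -> H y ->
  commute (f x) (f y) -> commute x y.
Proof.
case: sH => H1 [HM HV] inj Hx Hy C; apply: (inj); try exact: (HM).
by rewrite !hom.
Qed.

Lemma hom_comm x y : H x -> H y -> commute x y -> commute (f x) (f y).
Proof. by move=> Hx Hy C; rewrite /commute -!hom // C. Qed.

End Hom.

Lemma centralizer_sub c : subgroup (fun x => commute c x).
Proof.
split; first exact: commute1.
split; first by move=> x y; apply: commuteM.
by move=> x; apply: commuteV.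
Qed.

Lemma gen2 (X : gset gT) a b : commute a b ->
  (forall K, subgroup K -> K a -> K b -> Defs.subset X K) ->
  forall x, X x -> exists i j, x = zexp a i * zexp b j.
Proof.
move=> Cab gX x Xx; apply: (gX (fun x => exists i j, x = zexp a i * zexp b j)) => //.
- split; first by exists 0%R, 0%R; rewrite mulg1.
  split.
  + move=> _ _ [i [j ->]] [i' [j' ->]]; exists (i + i')%R, (j + j')%R.
    rewrite !zexpD !mulgA; congr (_ * _); rewrite -!mulgA; congr (_ * _).
    exact: commute_zexp2 (commute_sym Cab).
  + move=> _ [i [j ->]]; exists (- i)%R, (- j)%R.
    rewrite !zexpN invgM; apply: commute_sym; apply: commuteV.
    apply/commute_sym; apply: commuteV. exact: commute_zexp2.
- by exists 1%R, 0%R; rewrite mulg1.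
- by exists 0%R, 1%R; rewrite mul1g.
Qed.

Lemma commute_conj x y g : commute x y -> commute (x ^ g) (y ^ g).
Proof. by rewrite /commute -!conjMg => ->. Qed.

Lemma central_conj N Gr c g : normal_in N Gr -> Gr g ->
  (forall h, N h -> commute c h) -> forall h, N h -> commute (c ^ g) h.
Proof.
move=> [sN [[G1 [GM GV]] [sub nrm]]] Gg cen h Nh.
have N' : N (h ^ g^-1) by apply: nrm => //; exact: (GV).
have := commute_conj g (cen _ N'); by rewrite conjgKV.
Qed.

Lemma comm_next (Hk Gk Gk1 Hk1 H : gset gT) x y :
  normal_in Hk Gk -> normal_in Gk1 Gk -> (forall z, H z -> Gk1 z -> Hk1 z) ->
  Defs.subset Hk H -> Hk x -> Gk1 y -> Hk1 [~ x, y].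
Proof.
move=> [sHk [sGk [subH nH]]] [sG1 [_ [subG nG]]] nx HH Hx Gy.
apply: (nx).
  apply: (HH); rewrite commgEl; case: (sHk) => _ [HM HV]; apply: (HM); first exact: (HV).
  by apply: (nH) => //; apply: subG.
rewrite commgEr; case: (sG1) => _ [GM GV]; apply: (GM) => //.
by apply: (nG); [apply: subH | apply: (GV)].
Qed.

Lemma comm_pow b c y k : [~ b, c] = y -> commute y c ->
  commute b (zexp c k) -> zexp y k = 1.
Proof.
move=> E Cy Cb.
have cb : c ^ b = c * y^-1.
  have : [~ c, b] = y^-1 by rewrite -E invgR.
  rewrite commgEl => E2; by rewrite -E2 mulVKg.
have : (zexp c k) ^ b = zexp c k.
  by rewrite conjgE -Cb mulKg.
rewrite conj_zexp cb zexpMn; last by apply: commuteV; apply: commute_sym.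
move=> E3.
have E4 : zexp (y^-1) k = 1 by apply: (mulgI (zexp c k)); rewrite mulg1.
by rewrite -(invgK (zexp y k)) -zexpVx E4 invg1.
Qed.
End L.


Record Env (gT : groupType) (p : option nat) (H : gset gT) (f : gT -> gT)
  (a1 a2 a3 a4 a5 : gT) (G0 G1 G2 G3 G4 H0 H1 H2 H3 H4 : gset gT) : Prop := {
  pP : prime_or_inf p;
  sH : subgroup H; hom : hom_on H f; inj : injective_on H f;
  Ha1 : H a1; Ha2 : H a2; Ha3 : H a3; Ha4 : H a4;
  f1 : f a1 = a2; f2 : f a2 = a3; f3 : f a3 = a4; f4 : f a4 = a5;
  nH0 : normal_in H0 G0; nG1 : normal_in G1 G0;
  nH1 : normal_in H1 G1; nG2 : normal_in G2 G1;
  nH2 : normal_in H2 G2; nG3 : normal_in G3 G2;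
  sub0 : Defs.subset H0 H; sub1 : Defs.subset H1 H; sub2 : Defs.subset H2 H;
  nx1 : forall x, H x -> G1 x -> H1 x;
  nx2 : forall x, H x -> G2 x -> H2 x;
  nx3 : forall x, H x -> G3 x -> H3 x;
  nx4 : forall x, H x -> G4 x -> H4 x;
  G0a1 : G0 a1; G0a5 : G0 a5; H0a1 : H0 a1;
  G1a5 : G1 a5; H1a2 : H1 a2; G2a5 : G2 a5; H2a3 : H2 a3; G3a5 : G3 a5;
  G4a5 : G4 a5; sG4 : subgroup G4;
  gH0 : forall K, subgroup K -> K a1 -> K a2 -> K a3 -> K a4 -> Defs.subset H0 K;
  gH1 : forall K, subgroup K -> K a2 -> K a3 -> K a4 -> Defs.subset H1 K;
  gG1 : forall K, subgroup K -> K a2 -> K a3 -> K a4 -> K a5 -> Defs.subset G1 K;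
  gH2 : forall K, subgroup K -> K a3 -> K a4 -> Defs.subset H2 K;
  gH3 : forall K, subgroup K -> K a4 -> Defs.subset H3 K;
  gH4 : forall K, subgroup K -> Defs.subset H4 K;
  qc : ~ trivial_set G4 -> quot_cyclic_of_order p G4 H4
}.

Section Core.
Variables (gT : groupType) (p : option nat) (H : gset gT) (f : gT -> gT)
  (a1 a2 a3 a4 a5 : gT) (G0 G1 G2 G3 G4 H0 H1 H2 H3 H4 : gset gT).
Hypothesis E : Env p H f a1 a2 a3 a4 a5 G0 G1 G2 G3 G4 H0 H1 H2 H3 H4.

Lemma one_sub : subgroup (fun x : gT => x = 1).
Proof.
split => //; split; first by move=> x y -> ->; rewrite mulg1.
by move=> x ->; rewrite invg1.
Qed.

Lemma H4_triv x : H4 x -> x = 1.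
Proof. exact: (gH4 E one_sub). Qed.

Lemma H4_1 : H4 1.
Proof.
apply: (nx4 E); first by case: (sH E).
by case: (sG4 E).
Qed.

Lemma torsion j : zexp a5 (j * j)%R = 1 -> zexp a5 j = 1.
Proof.
move=> Ej.
case: (classic (trivial_set G4)) => [T|NT].
  by rewrite (T _ (G4a5 E)) zexp1g.
have [g [[Gg Q] Hp]] := qc E NT.
have [e He] : exists e, a5 = zexp g e.
  have [m [Hm|Hm]] := Q _ (G4a5 E); move/H4_triv: Hm => Hm.
    exists (Posz m); rewrite zexpP -(invgK (g ^+ m)); exact/esym/mulg1_eq.
  by exists (- Posz m)%R; rewrite zexpN zexpP; apply/esym/mulg1_eq.
have aE k : zexp a5 k = zexp g (e * k)%R by rewrite He zexpM.
case: p Hp (pP E) => [q [Hq _] pq | Hinf _].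
  have gq : g ^+ q = 1 by exact: H4_triv.
  have a5q : a5 ^+ q = 1.
    rewrite -zexpP aE.
    have -> : (e * Posz q)%R = (Posz q * e)%R by lia.
    by rewrite zexpM zexpP gq zexp1g.
  apply: zexp_abs1; apply: (expg_sq pq a5q).
  by rewrite -abszM; apply: zexp_eq1.
rewrite aE in Ej; move/zexp_eq1: Ej => Ej.
case: (posnP `|(e * (j * j))%R|%N) => [A0|Apos].
  rewrite aE.
  have : (e * (j * j))%R = 0%R by lia.
  move=> Z0.
  have N0 : (`|e| * (`|j| * `|j|))%N = 0 by rewrite -!abszM Z0.
  move/eqP: N0; rewrite !muln_eq0 orbb => /orP [] /eqP N0.
    by have -> : (e * j)%R = 0%R by lia.
  by have -> : (e * j)%R = 0%R by lia.
by case: (Hinf _ Apos); rewrite Ej; exact: H4_1.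
Qed.


Let sHE := sH E.
Let homE := hom E.

Lemma inj1 (x : gT) : H x -> f x = 1 -> x = 1.
Proof.
move=> Hx fx; apply: (inj E) => //; first by case: sHE.
by rewrite fx (hom1 sHE homE).
Qed.

Lemma shift (x y : gT) : H x -> H y -> commute x y -> commute (f x) (f y).
Proof. move=> Hx Hy C. exact: (hom_comm (hom E) Hx Hy C). Qed.

Lemma commute_cancel (x u v : gT) : commute x u -> commute x (u * v) -> commute x v.
Proof.
move=> C1 C2; have -> : v = u^-1 * (u * v) by rewrite mulKg.
apply: commuteM => //; exact: commuteV.
Qed.

Lemma conj_comm (x g : gT) : commute x g -> x ^ g = x.
Proof. by move=> C; rewrite conjgE C mulKg. Qed.

Lemma Hz (x : gT) k : H x -> H (zexp x k).
Proof. by move=> Hx; apply: sub_zexp. Qed.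

Lemma core2 : commute a1 a2 -> [~ a1, a3] = 1.
Proof.
move=> C12.
have C23 : commute a2 a3 by rewrite -(f1 E) -(f2 E); apply: shift => //; [exact: Ha1 E | exact: Ha2 E].
have C34 : commute a3 a4 by rewrite -(f2 E) -(f3 E); apply: shift => //; [exact: Ha2 E | exact: Ha3 E].
have cen3 : forall h, H1 h -> commute a3 h.
  apply: (gH1 E (centralizer_sub a3)); [exact: commute_sym | exact: commute_refl | exact: C34].
have cen3' := central_conj (nH1 E) (G1a5 E) cen3.
have Cz2 : commute a2 [~ a3, a5].
  rewrite commgEl; apply: commuteM; first by apply: commuteV; exact: commute_sym.
  apply: commute_sym; apply: cen3'; exact: H1a2 E.
have Hz3 : H3 [~ a3, a5].
  exact: comm_next (nH2 E) (nG3 E) (nx3 E) (sub2 E) (H2a3 E) (G3a5 E).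
have [i [i' Ez]] := gen2 (commute_refl a4) (fun K sK Ka _ => gH3 E sK Ka) Hz3.
rewrite -zexpD in Ez; set j := (i + i')%R in Ez.
have Hy : H [~ a2, a4] by apply: sub_comm => //; [exact: Ha2 E | exact: Ha4 E].
have fy : f [~ a2, a4] = zexp a4 j.
  by rewrite (homR sHE homE (Ha2 E) (Ha4 E)) (f2 E) (f4 E).
have Ey : [~ a2, a4] = zexp a3 j.
  apply: (inj E) => //; first exact: Hz (Ha3 E).
  by rewrite fy (homZ sHE homE _ (Ha3 E)) (f3 E).
have Ej2 : zexp a3 (j * j)%R = 1.
  rewrite zexpM; apply: (comm_pow (b := a2) (c := a4)) => //.
    by apply: commute_sym; apply: commute_zexp; exact: commute_sym.
  by rewrite -Ez.
have Ej4 : zexp a4 (j * j)%R = 1.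
  by rewrite -(f3 E) -(homZ sHE homE _ (Ha3 E)) Ej2 (hom1 sHE homE).
have Ej5 : zexp a5 (j * j)%R = 1.
  by rewrite -(f4 E) -(homZ sHE homE _ (Ha4 E)) Ej4 (hom1 sHE homE).
have T5 := torsion Ej5.
have T4 : zexp a4 j = 1.
  by apply: inj1; [exact: Hz (Ha4 E) | rewrite (homZ sHE homE _ (Ha4 E)) (f4 E)].
have y1 : [~ a2, a4] = 1 by apply: inj1 => //; rewrite fy.
apply: inj1; first by apply: sub_comm => //; [exact: Ha1 E | exact: Ha3 E].
by rewrite (homR sHE homE (Ha1 E) (Ha3 E)) (f1 E) (f3 E).
Qed.

Lemma push2 x : H x -> H (f x) -> f (f x) = 1 -> x = 1.
Proof. move=> Hx Hfx E2; apply: inj1 => //; exact: inj1. Qed.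

Lemma core3 : commute a1 a2 -> commute a1 a3 -> [~ a1, a4] = 1.
Proof.
move=> C12 C13.
have Ha1' := Ha1 E; have Ha2' := Ha2 E; have Ha3' := Ha3 E; have Ha4' := Ha4 E.
have [HH1 [HHM HHV]] := sHE.
have fZ (x : gT) (k : int) : H x -> f (zexp x k) = zexp (f x) k by move=> Hx; exact: (homZ sHE homE _ Hx).
have C23 : commute a2 a3 by rewrite -(f1 E) -(f2 E); apply: shift.
have C34 : commute a3 a4 by rewrite -(f2 E) -(f3 E); apply: shift.
have C45 : commute a4 a5 by rewrite -(f3 E) -(f4 E); apply: shift.
have C24 : commute a2 a4 by rewrite -(f1 E) -(f3 E); apply: shift.
have C35 : commute a3 a5 by rewrite -(f2 E) -(f4 E); apply: shift.
have Hw : H2 [~ a2, a5].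
  exact: comm_next (nH1 E) (nG2 E) (nx2 E) (sub1 E) (H1a2 E) (G2a5 E).
have [s [t Ew]] := gen2 C34 (gH2 E) Hw.
have Hv : H [~ a1, a4] by apply: sub_comm.
have fv : f [~ a1, a4] = [~ a2, a5].
  by rewrite (homR sHE homE Ha1' Ha4') (f1 E) (f4 E).
have Ev : [~ a1, a4] = zexp a2 s * zexp a3 t.
  apply: (inj E) => //; first by apply: HHM; apply: Hz.
  by rewrite fv Ew (homM homE) // ?fZ // ?(f2 E) ?(f3 E) //; apply: Hz.
have cen2 : forall h, H0 h -> commute a2 h.
  apply: (gH0 E (centralizer_sub a2));
    first [exact: (commute_sym C12) | exact: commute_refl | done].
have cen2' := central_conj (nH0 E) (G0a5 E) cen2.
have Cw1 : commute a1 [~ a2, a5].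
  rewrite commgEl; apply: commuteM; first by apply: commuteV; exact: C12.
  apply: commute_sym; apply: cen2'; exact: H0a1 E.
have C1t : commute a1 (zexp a4 t).
  apply: (commute_cancel (u := zexp a3 s)); first by apply: commute_zexp.
  by rewrite -Ew.
have Evt : zexp [~ a1, a4] t = 1.
  apply: (comm_pow (b := a1) (c := a4)) => //.
  rewrite Ev; apply: commute_sym; apply: commuteM; apply: commute_zexp.
    exact: commute_sym. exact: commute_sym.
have Hst : H (zexp a2 (s * t)%R) by apply: Hz.
have Htt : H (zexp a3 (t * t)%R) by apply: Hz.
have E5 : zexp a4 (s * t)%R * zexp a5 (t * t)%R = 1.
  move: Evt; rewrite Ev zexpMn; last by apply: commute_zexp2.
  rewrite -!zexpM => E0.
  have E1 : f (zexp a2 (s * t)%R * zexp a3 (t * t)%R) = zexp a3 (s * t)%R * zexp a4 (t * t)%R.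
    by rewrite (homM homE) // !fZ // (f2 E) (f3 E).
  have E2 : f (zexp a3 (s * t)%R * zexp a4 (t * t)%R) = zexp a4 (s * t)%R * zexp a5 (t * t)%R.
    by rewrite (homM homE) ?fZ ?(f3 E) ?(f4 E) //; apply: Hz.
  by rewrite -E2 -E1 E0 !(hom1 sHE homE).
have Ett : zexp a5 (t * t)%R = 1.
  apply: H4_triv; apply: (nx4 E).
    rewrite -(mulg1_eq E5); apply: HHV; exact: Hz.
  exact: sub_zexp (sG4 E) (G4a5 E).
have T5 := torsion Ett.
have T4 : zexp a4 t = 1 by apply: inj1; [exact: Hz | rewrite fZ // (f4 E)].
have T3 : zexp a3 t = 1 by apply: inj1; [exact: Hz | rewrite fZ // (f3 E)].
rewrite T4 mulg1 in Ew; rewrite T3 mulg1 in Ev.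
have cen4 : forall h, G1 h -> commute a4 h.
  apply: (gG1 E (centralizer_sub a4));
    first [exact: (commute_sym C24) | exact: (commute_sym C34) | exact: commute_refl | done].
have [_ [[GG1 [GGM GGV]] [_ nrm1]]] := nG1 E.
have Gu : G1 (a5 ^ a1) by apply: nrm1; [exact: G0a1 E | exact: G1a5 E].
have Cvu : commute [~ a1, a4] (a5 ^ a1).
  have C' := commute_conj a1 C45.
  have e : a4 ^ a1 = a4 * [~ a4, a1] by rewrite commgEl mulVKg.
  have C2 : commute (a5 ^ a1) (a4 * [~ a4, a1]) by rewrite -e; exact: commute_sym.
  have C3 : commute (a5 ^ a1) [~ a4, a1].
    apply: (commute_cancel (u := a4)) => //; apply: commute_sym; exact: cen4.
  rewrite -invgR in C3; have C4 := commuteV C3; rewrite invgK in C4.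
  exact: commute_sym.
have Cv5 : commute [~ a1, a4] a5.
  have Cv1 : commute [~ a1, a4] a1^-1.
    have Cv : commute [~ a1, a4] a1.
      by rewrite Ev; apply: commute_sym; apply: commute_zexp.
    exact: (commuteV Cv).
  have := commute_conj a1^-1 Cvu; rewrite conjgK conj_comm //.
have Ews : zexp [~ a2, a5]^-1 s = 1.
  apply: (comm_pow (b := a5) (c := a2)); first by rewrite invgR.
    apply: commute_sym; apply: commuteV; rewrite Ew; apply: commute_zexp.
    exact: C23.
  by rewrite -Ev; apply: commute_sym.
rewrite zexpVx Ew -zexpM in Ews.
move: Ews => /eqP; rewrite invg_eq1 => /eqP Ews.
have E5' : zexp a5 (s * s)%R = 1.
  have E4' : zexp a4 (s * s)%R = 1 by rewrite -(f3 E) -fZ // Ews (hom1 sHE homE).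
  by rewrite -(f4 E) -fZ // E4' (hom1 sHE homE).
have T5' := torsion E5'.
have T4' : zexp a4 s = 1 by apply: inj1; [exact: Hz | rewrite fZ // (f4 E)].
have T3' : zexp a3 s = 1 by apply: inj1; [exact: Hz | rewrite fZ // (f3 E)].
by apply: inj1 => //; rewrite fv Ew.
Qed.

End Core.


Lemma gen_mem (gT : groupType) (X S : gset gT) (x : gT) :
  set_eq X (generated S) -> S x -> X x.
Proof. by move=> eq Sx; apply/eq => K _ sub; apply: sub. Qed.

Lemma gen_sub (gT : groupType) (X S K : gset gT) :
  set_eq X (generated S) -> subgroup K -> (forall x, S x -> K x) -> Defs.subset X K.
Proof. by move=> eq sK sub x /eq Xx; apply: Xx. Qed.

Theorem mainTheorem10 (gT : groupType) (p : option nat) (G H : gset gT)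
  (f : gT -> gT) (c : nat) :
  SSP p G H f -> ssp_length p G 5 -> of_Gnc_type G H f 5 c ->
  c = 4 \/ c = 5.
Proof.
move=> [pP [_ [inj HK]]] _ [a [[Ha [fa gen]] [/andP [c2 c5] [cs cn]]]].
have K0 := HK 0%N; have K1 := HK 1%N; have K2 := HK 2%N; have K4 := HK 4%N.
case: K0 => [[[_ [sH [_ [homH _]]]] _] [nH0 [nG1 _]]].
case: K1 => [_ [nH1 [nG2 _]]].
case: K2 => [_ [nH2 [nG3 _]]].
case: K4 => [[[sG4 _] _] [_ [_ [_ qc]]]].
have [eG0 eH0] := gen 0%N isT.
have [eG1 eH1] := gen 1%N isT.
have [eG2 eH2] := gen 2%N isT.
have [eG3 eH3] := gen 3%N isT.
have [eG4 eH4] := gen 4%N isT.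
have E : Env p H f (a 1%N) (a 2%N) (a 3%N) (a 4%N) (a 5%N)
   (Gk G H f 0) (Gk G H f 1) (Gk G H f 2) (Gk G H f 3) (Gk G H f 4)
   (Hk G H f 0) (Hk G H f 1) (Hk G H f 2) (Hk G H f 3) (Hk G H f 4).
  split => //.
  all: try (apply: Ha; done).
  all: try (apply/esym; apply: fa; done).
  all: try (by move=> x []).
  all: try (by move=> x Hx Gx; split).
  all: try (apply: gen_mem; [eassumption | eexists; split; last reflexivity; done]).
  move=> K sK; repeat (match goal with |- Defs.subset _ _ => fail 1 | |- _ => intro end).
    apply: gen_sub; [eassumption | exact: sK | ].
    move=> x [j [/andP [lo hi] ->]].
    (have : (j = 1 \/ j = 2 \/ j = 3 \/ j = 4 \/ j = 5)%N by lia).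
    case=> [e|[e|[e|[e|e]]]]; subst j; first [assumption | lia].
  all: try (move=> K sK; repeat (match goal with |- Defs.subset _ _ => fail 1 | |- _ => intro end);
    apply: gen_sub; [eassumption | exact: sK | ];
    move=> x [j [/andP [lo hi] ->]];
    (have : (j = 1 \/ j = 2 \/ j = 3 \/ j = 4 \/ j = 5)%N by lia);
    case=> [e|[e|[e|[e|e]]]]; subst j; first [assumption | lia]).
have C12 : commute (a 1%N) (a 2%N) by apply/commgP/eqP; apply: cs; lia.
have : (c = 2 \/ c = 3 \/ c = 4 \/ c = 5)%N by lia.
case=> [e|[e|e]]; [exfalso|exfalso|by []].
  subst c; apply: (cn isT); exact: core2 E C12.
subst c; apply: (cn isT).
apply: (core3 E C12); apply/commgP/eqP; apply: cs; lia.
Qed.
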